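(* Let $\mathcal{D}=(\Omega,\mathcal{B})$ be a supersimple $2$-$(n,4,\lambda)$ design satisfying property $(\triangle)$, such that $(\Omega,\mathcal{C})$ is a regular two-graph where $\mathcal{C}$ is the set of collinear triples, and let $\infty\in\Omega$. Let $x,y,z\in\Omega$ be pairwise distinct. Then: (a) the order of $[x,y]\cdot[y,z]$ is $2$ if $x\in\overline{y,z}$, and $3$ if $x\notin\overline{y,z}$; (b) if $x\notin\overline{y,z}$ then $[z,x,y,z]=[x,y]$; (c) $\mathcal{L}(\mathcal{D})=\mathcal{L}_\infty(\mathcal{D})$ is a group of automorphisms of $\mathcal{D}$.
   Context: A $2$-$(n,4,\lambda)$ design $(\Omega,\mathcal{B})$: $n$ points, a multiset of $4$-subsets (lines), every $2$-subset in exactly $\lambda$ lines; supersimple: distinct lines meet in at most two points. For distinct $a,b$ with lines $\{a,b,a_i,b_i\}$ through them, $[a,b]:=(a,b)\prod_i(a_i,b_i)$; $[a,a]:=1$. Permutations act on the right, products composed left to right; $[a_0,\dots,a_k]:=[a_0,a_1]\cdots[a_{k-1},a_k]$. $\mathcal{L}(\mathcal{D})$ is the set of all move sequences; $\mathcal{L}_\infty(\mathcal{D})$ the set of move sequences starting at $\infty$. $\overline{y,z}$ is the set of points $w$ such that some line contains $y,z,w$. Property $(\triangle)$: if $B_1,B_2\in\mathcal{B}$ with $|B_1\cap B_2|=2$ then $B_1\triangle B_2\in\mathcal{B}$. Regular two-graph: $(\Omega,\mathcal{C})$ is a $2$-$(n,3,\mu)$ design with every $4$-subset containing $0,2$ or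 $4$ members of $\mathcal{C}$. *)

(* Defs.v *)
From mathcomp Require Import all_boot all_fingroup.
Set Implicit Arguments. Unset Strict Implicit. Unset Printing Implicit Defensive.
Local Open Scope group_scope.

Section Design.
Variable T : finType.
(* Lines of the design, as a set of 4-subsets (supersimplicity forbids
   repeated lines, so a set is as general as a multiset here). *)
Variable Bs : {set {set T}}.

Definition blocks_of_size4 := forall B, B \in Bs -> #|B| = 4.

Definition design_2 (n lam : nat) :=
  [/\ #|T| = n, blocks_of_size4 &
      forall a b : T, a != b -> #|[set B in Bs | (a \in B) && (b \in B)]| = lam].

Definition supersimple :=
  forall B1 B2, B1 \in Bs -> B2 \in Bs -> B1 != B2 -> #|B1 :&: B2| <= 2.

Definition prop_triangle :=
  forall B1 B2, B1 \in Bs -> B2 \in Bs -> #|B1 :&: B2| = 2 ->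
    (B1 :\: B2) :|: (B2 :\: B1) \in Bs.

Definition collinear_triples : {set {set T}} :=
  [set t : {set T} | (#|t| == 3) && [exists B in Bs, t \subset B]].

Definition regular_two_graph (C : {set {set T}}) :=
  (forall t, t \in C -> #|t| = 3) /\
  (exists mu : nat, forall a b : T, a != b ->
      #|[set t in C | (a \in t) && (b \in t)]| = mu) /\
  (forall S : {set T}, #|S| = 4 ->
      #|[set t in C | t \subset S]| \in [:: 0; 2; 4]).

Definition overline (y z : T) : {set T} :=
  [set w | [exists B in Bs, [&& y \in B, z \in B & w \in B]]].

Definition swap_pair (S : {set T}) : {perm T} :=
  match [pick u in S] with
  | Some u => match [pick v in S :\ u] with
              | Some v => tperm u v
              | None => 1
              end
  | None => 1
  end.

(* [a,b] = (a,b) * prod_i (a_i,b_i) over the lines {a,b,a_i,b_i};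
   [a,a] = 1.  MathComp permutations act on the right with
   (s * t) x = t (s x), matching the paper's convention. *)
Definition bracket (a b : T) : {perm T} :=
  if a == b then 1 else
  tperm a b * \prod_(B in Bs | (a \in B) && (b \in B)) swap_pair (B :\ a :\ b).

(* [a_0, a_1, ..., a_k] = [a_0,a_1] ... [a_{k-1},a_k] *)
Fixpoint move_seq (a : T) (s : seq T) : {perm T} :=
  match s with
  | [::] => 1
  | b :: s' => bracket a b * move_seq b s'
  end.

Definition L_D (g : {perm T}) : Prop := exists (a : T) (s : seq T), g = move_seq a s.
Definition L_inf (inf : T) (g : {perm T}) : Prop := exists s : seq T, g = move_seq inf s.

Definition automorphism (g : {perm T}) : Prop :=
  forall B : {set T}, (B \in Bs) = (g @: B \in Bs).

Definition is_group_of_automorphisms (P : {perm T} -> Prop) : Prop :=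
  [/\ P 1, (forall g h, P g -> P h -> P (g * h)), (forall g, P g -> P g^-1)
    & forall g, P g -> automorphism g].

End Design.

(* Main.v *)
Require Import Defs.
From mathcomp Require Import all_boot all_fingroup.
From mathcomp Require Import zify.
From mathcomp Require Import cyclic.
Local Open Scope group_scope.
Set Implicit Arguments. Unset Strict Implicit. Unset Printing Implicit Defensive.

Ltac destr := repeat match goal with H : is_true (_ && _) |- _ => case/andP: H => ? ? end.
Ltac dist := repeat (rewrite ?eqxx /=; match goal with
   | H : is_true (negb (@eq_op ?S ?x ?y)) |- context[@eq_op _ ?x ?y] => rewrite (negbTE H)
   | H : is_true (negb (@eq_op ?S ?x ?y)) |- context[@eq_op _ ?y ?x] => rewrite [@eq_op S y x]eq_sym (negbTE H)
   end).
Ltac setcase w := repeat match goal with |- context[@eq_op ?S w ?x] =>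
   let E := fresh "E" in destruct (@eq_op S w x) eqn:E; [move/eqP: E => E; subst w | ] end.
Ltac solveset := let w := fresh "w" in apply/setP => w; rewrite !inE; setcase w; dist; rewrite ?orbT ?orbF ?andbT ?andbF //.
Ltac uq := rewrite /= ?inE ?negb_or; dist; done.
Ltac unq H := rewrite /= ?inE ?negb_or in H; destr.

Section S.
Variable T : finType.
Variable Bs : {set {set T}}.

Lemma rem3 (A : {set T}) a b w : #|A| = 4 -> a \in A -> b \in A -> w \in A ->
  uniq [:: a; b; w] -> exists d, uniq [:: a; b; w; d] /\ A = [set a; b; w; d].
Proof.
move=> HA Ha Hb Hw U; unq U.
have Hb' : b \in A :\ a by rewrite !inE Hb; dist.
have Hw' : w \in A :\ a :\ b by rewrite !inE Hw; dist.
have: #|A :\ a :\ b :\ w| == 1%N.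
  move: (cardsD1 a A) (cardsD1 b (A :\ a)) (cardsD1 w (A :\ a :\ b)).
  rewrite HA Ha Hb' Hw' => E1 E2 E3. rewrite E2 E3 in E1. by case: E1 => ->.
case/cards1P => d Hd.
have Hd' : d \in A :\ a :\ b :\ w by rewrite Hd set11.
move: (Hd'); rewrite !inE => /andP[Hdw /andP[Hdb /andP[Hda HdA]]].
exists d; split.
  by rewrite /= !inE !negb_or; dist.
apply/setP => x; rewrite !inE.
case: (boolP (x \in A :\ a :\ b :\ w)) => Hx.
  move: Hx; rewrite Hd inE => /eqP ->; by rewrite HdA eqxx !orbT.
move: Hx; rewrite !inE.
case: (x =P a) => [->|_]; first by rewrite Ha.
case: (x =P b) => [->|_]; first by rewrite Hb orbT.
case: (x =P w) => [->|_]; first by rewrite Hw !orbT.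
move=> /= Hx. rewrite (negbTE Hx); apply/esym/eqP => Exd; by rewrite Exd HdA in Hx.
Qed.


Lemma rem2 (A : {set T}) a b : #|A| = 4 -> a \in A -> b \in A -> a != b ->
  exists c d, uniq [:: a; b; c; d] /\ A = [set a; b; c; d].
Proof.
move=> HA Ha Hb Hab.
have Hb' : b \in A :\ a by rewrite !inE Hb eq_sym Hab.
have: (0 < #|A :\ a :\ b|)%N.
  move: (cardsD1 a A) (cardsD1 b (A :\ a)); rewrite HA Ha Hb' => E1 E2.
  rewrite E2 in E1. lia.
rewrite card_gt0 => /set0Pn [c Hc].
move: (Hc); rewrite !inE => /andP[Hcb /andP[Hca HcA]].
have U3 : uniq [:: a; b; c] by rewrite /= !inE !negb_or Hab eq_sym Hca eq_sym Hcb.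
have [d [U E]] := rem3 HA Ha Hb HcA U3.
by exists c, d.
Qed.

Lemma rem1 (A : {set T}) a : #|A| = 4 -> a \in A ->
  exists c d e, uniq [:: a; c; d; e] /\ A = [set a; c; d; e].
Proof.
move=> HA Ha.
have: (0 < #|A :\ a|)%N.
  move: (cardsD1 a A); rewrite HA Ha => E1.
  lia.
rewrite card_gt0 => /set0Pn [c Hc].
move: (Hc); rewrite !inE => /andP[Hca HcA].
have Hac : a != c by rewrite eq_sym.
have [d [e [U E]]] := rem2 HA Ha HcA Hac.
by exists c, d, e.
Qed.

Lemma set_eq_mem (X Y : {set T}) : X \in Bs -> X =i Y -> Y \in Bs.
Proof. by move=> H /setP <-. Qed.

Lemma card4 (p q r s : T) : uniq [:: p; q; r; s] -> #|[set p; q; r; s]| = 4.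
Proof.
move=> U; rewrite (@eq_card _ _ (mem [:: p;q;r;s])); first exact/card_uniqP.
by move=> w; rewrite !inE !orbA.
Qed.

Lemma card3 (p q r : T) : uniq [:: p; q; r] -> #|[set p; q; r]| = 3.
Proof.
move=> U; rewrite (@eq_card _ _ (mem [:: p;q;r])); first exact/card_uniqP.
by move=> w; rewrite !inE !orbA.
Qed.

Hypothesis H4 : blocks_of_size4 Bs.
Hypothesis Hss : supersimple Bs.
Hypothesis Htri : prop_triangle Bs.

Lemma ss3 (B1 B2 : {set T}) a b c : B1 \in Bs -> B2 \in Bs -> uniq [:: a; b; c] ->
  a \in B1 -> b \in B1 -> c \in B1 -> a \in B2 -> b \in B2 -> c \in B2 -> B1 = B2.
Proof.
move=> H1 H2 U a1 b1 c1 a2 b2 c2; apply/eqP; apply: contraT => Hne.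
have := Hss H1 H2 Hne.
have: [set a; b; c] \subset B1 :&: B2.
  apply/subsetP => w; rewrite !inE => /orP[/orP[]|] /eqP ->; by rewrite ?a1 ?a2 ?b1 ?b2 ?c1 ?c2.
move/subset_leq_card; rewrite card3 // => Hle Hle2.
by have := leq_trans Hle Hle2.
Qed.

Lemma tri (p q r s u v : T) : [set p; q; r; s] \in Bs -> [set p; q; u; v] \in Bs ->
  uniq [:: p; q; r; s; u; v] -> [set r; s; u; v] \in Bs.
Proof.
move=> H1 H2 U.
have E : [set p; q; r; s] :&: [set p; q; u; v] = [set p; q].
  unq U. solveset.
have := Htri H1 H2.
rewrite E cards2.
have U' := U; unq U'. dist. move=> /(_ erefl) H.
apply: (set_eq_mem H). move=> w. rewrite !inE.
setcase w; dist; rewrite ?orbT ?orbF ?andbT ?andbF //.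
Qed.


Lemma ovlP a b w : reflect (exists2 B, B \in Bs & [&& a \in B, b \in B & w \in B])
  (w \in overline Bs a b).
Proof. rewrite inE; apply: (iffP existsP) => [[B /andP[HB H]]|[B HB H]]; exists B => //; by rewrite HB. Qed.

Lemma ovl_perm a b w : w \in overline Bs a b ->
  [/\ w \in overline Bs b a, a \in overline Bs b w, a \in overline Bs w b,
      b \in overline Bs a w & b \in overline Bs w a].
Proof.
case/ovlP => B HB /and3P[Ha Hb Hw].
split; apply/ovlP; exists B => //; by rewrite ?Ha ?Hb ?Hw.
Qed.

Lemma line_ovl (B : {set T}) a b w : B \in Bs -> a \in B -> b \in B -> w \in B ->
  w \in overline Bs a b.
Proof. move=> HB Ha Hb Hw; apply/ovlP; exists B => //; by rewrite Ha Hb Hw. Qed.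

Lemma ovl_ex a b w : uniq [:: a; b; w] -> w \in overline Bs a b ->
  exists d, uniq [:: a; b; w; d] /\ [set a; b; w; d] \in Bs.
Proof.
move=> U /ovlP [B HB /and3P[Ha Hb Hw]].
have [d [U' E]] := rem3 (H4 HB) Ha Hb Hw U.
by exists d; rewrite -E.
Qed.

Lemma line_in4 (p q r s : T) :
  [/\ p \in [set p; q; r; s], q \in [set p; q; r; s], r \in [set p; q; r; s] &
      s \in [set p; q; r; s]].
Proof. by rewrite !inE !eqxx !orbT. Qed.

Lemma prod_fix (I : eqType) (r : seq I) (P : pred I) (F : I -> {perm T}) c :
  (forall i, i \in r -> P i -> F i c = c) -> (\prod_(i <- r | P i) F i) c = c.
Proof.
elim: r => [|i r IH] H; first by rewrite big_nil perm1.
have H' : forall j, j \in r -> P j -> F j c = c.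
  by move=> j Hj; apply: H; rewrite inE Hj orbT.
rewrite big_cons; case: ifP => Pi; last exact: IH.
by rewrite permM H ?mem_head // IH.
Qed.

Lemma prod_one (I : eqType) (r : seq I) (P : pred I) (F : I -> {perm T}) c d i0 :
  uniq r -> i0 \in r -> P i0 -> F i0 c = d ->
  (forall i, i \in r -> P i -> i != i0 -> F i c = c /\ F i d = d) ->
  (\prod_(i <- r | P i) F i) c = d.
Proof.
elim: r => [|i r IH] //= /andP[Hi U] Hin P0 F0 H.
rewrite big_cons.
case: (i =P i0) => [Ei|Ni].
  subst i0; rewrite P0 permM F0 prod_fix // => j Hj Pj.
  apply: (proj2 (H j _ Pj _)); first by rewrite inE Hj orbT.
  by apply: contraNneq Hi => <-.
have Hin' : i0 \in r by move: Hin; rewrite inE; case: eqP => // E; case: Ni.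
have H' : forall j, j \in r -> P j -> j != i0 -> F j c = c /\ F j d = d.
  by move=> j Hj; apply: H; rewrite inE Hj orbT.
case: ifP => Pi; last exact: IH U Hin' P0 F0 H'.
have Ni' : i != i0 by apply/eqP.
rewrite permM (proj1 (H i (mem_head _ _) Pi Ni')).
exact: IH U Hin' P0 F0 H'.
Qed.

Lemma swap_pairE (u v : T) : u != v -> Defs.swap_pair [set u; v] = tperm u v.
Proof.
move=> Huv; rewrite /Defs.swap_pair.
case: pickP => [w Hw|H]; last by have := H u; rewrite !inE eqxx.
case: pickP => [w' Hw'|H]; last first.
  move: Hw; rewrite !inE => /orP[]/eqP Ew; subst w.
    by have := H v; rewrite !inE eqxx orbT eq_sym Huv.
  by have := H u; rewrite !inE eqxx Huv.
move: Hw Hw'; rewrite !inE => /orP[]/eqP -> /andP[Hne /orP[]/eqP Ew']; subst w';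
  rewrite ?eqxx // in Hne; by rewrite tpermC.
Qed.

Lemma swap_fix (B : {set T}) a b x : B \in Bs -> a \in B -> b \in B -> a != b ->
  x \notin B :\ a :\ b -> Defs.swap_pair (B :\ a :\ b) x = x.
Proof.
move=> HB Ha Hb Hab Hx.
have [c [d [U E]]] := rem2 (H4 HB) Ha Hb Hab.
have E2 : B :\ a :\ b = [set c; d] by rewrite E; unq U; solveset.
have U' := U; unq U'.
rewrite E2 swap_pairE //; apply: tpermD.
  by apply/eqP => Ex; move: Hx; rewrite E2 Ex !inE eqxx.
by apply/eqP => Ex; move: Hx; rewrite E2 Ex !inE eqxx orbT.
Qed.

Lemma br_aa a : bracket Bs a a = 1.
Proof. by rewrite /bracket eqxx. Qed.

Lemma br_unfold a b : a != b -> forall c, bracket Bs a b c =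
  (\prod_(B <- index_enum {set T} | (B \in Bs) && ((a \in B) && (b \in B))) Defs.swap_pair (B :\ a :\ b)) (tperm a b c).
Proof. by move=> Hab c; rewrite /bracket (negbTE Hab) permM big_mkcondr /= -big_mkcondr. Qed.


Lemma br_a a b : a != b -> bracket Bs a b a = b.
Proof.
move=> Hab; rewrite br_unfold // tpermL prod_fix // => B _ /andP[HB /andP[Ha Hb]].
by apply: swap_fix => //; rewrite !inE eqxx.
Qed.

Lemma br_b a b : a != b -> bracket Bs a b b = a.
Proof.
move=> Hab; rewrite br_unfold // tpermR prod_fix // => B _ /andP[HB /andP[Ha Hb]].
by apply: swap_fix => //; rewrite !inE eqxx andbF.
Qed.

Lemma br_fix a b c : a != b -> c != a -> c != b -> c \notin overline Bs a b ->
  bracket Bs a b c = c.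
Proof.
move=> Hab Hca Hcb Hc; rewrite br_unfold // tpermD 1?eq_sym // prod_fix // => B _ /andP[HB /andP[Ha Hb]].
apply: swap_fix => //; rewrite !inE; apply/negP => /andP[_ /andP[_ HcB]].
by move: Hc; rewrite (line_ovl HB Ha Hb HcB).
Qed.

Lemma br_line a b c d : uniq [:: a; b; c; d] -> [set a; b; c; d] \in Bs ->
  bracket Bs a b c = d.
Proof.
move=> U HL; have U' := U; unq U'.
rewrite br_unfold // tpermD 1?eq_sym //.
have [La [Lb [Lc Ld]]] : [/\ a \in [set a; b; c; d], b \in [set a; b; c; d], c \in [set a; b; c; d] &
      d \in [set a; b; c; d]] by rewrite !inE !eqxx !orbT.
apply: (@prod_one _ _ _ _ _ _ [set a; b; c; d]).
- exact: index_enum_uniq.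
- exact: mem_index_enum.
- by rewrite HL La Lb.
- have -> : [set a; b; c; d] :\ a :\ b = [set c; d] by solveset.
  by rewrite swap_pairE // tpermL.
move=> B _ /andP[HB /andP[Ha Hb]] HBL.
have Hc : c \notin B.
  apply/negP => Hc; move/eqP: HBL; apply.
  by apply: (ss3 (a := a) (b := b) (c := c)) => //; rewrite /= !inE !negb_or; dist.
have Hd : d \notin B.
  apply/negP => Hd; move/eqP: HBL; apply.
  by apply: (ss3 (a := a) (b := b) (c := d)) => //; rewrite /= !inE !negb_or; dist.
split; apply: swap_fix => //; rewrite !inE; apply/negP => /andP[_ /andP[_ H]].
  by rewrite H in Hc.
by rewrite H in Hd.
all: by dist.
Qed.

Lemma br_sym a b : bracket Bs a b = bracket Bs b a.
Proof.
rewrite /bracket eq_sym; case: eqP => // _; rewrite tpermC; congr (_ * _).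
apply: eq_big; first by move=> B; rewrite [(a \in B) && _]andbC.
move=> B _; congr Defs.swap_pair; apply/setP => w; by rewrite !inE andbCA.
Qed.

Lemma br_cases a b w : a != b -> w != a -> w != b ->
  (exists d, uniq [:: a; b; w; d] /\ [set a; b; w; d] \in Bs /\ bracket Bs a b w = d) \/
  (w \notin overline Bs a b /\ bracket Bs a b w = w).
Proof.
move=> Hab Hwa Hwb.
case: (boolP (w \in overline Bs a b)) => Hw; last by right; rewrite br_fix.
left; have U : uniq [:: a; b; w] by uq.
have [d [U' HL]] := ovl_ex U Hw.
by exists d; rewrite (br_line U' HL).
Qed.

Ltac lperm H := apply: (set_eq_mem H) => ?; rewrite !inE; by do !case: (_ == _).

Lemma br_inv a b : bracket Bs a b * bracket Bs a b = 1.
Proof.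
case: (eqVneq a b) => [->|Hab]; first by rewrite br_aa mulg1.
apply/permP => w; rewrite permM perm1.
case: (eqVneq w a) => [->|Hwa]; first by rewrite br_a // br_b.
case: (eqVneq w b) => [->|Hwb]; first by rewrite br_b // br_a.
case: (br_cases Hab Hwa Hwb) => [[d [U [HL E]]]|[Hn E]]; rewrite E //.
have U' := U; unq U'.
apply: br_line; first by uq.
lperm HL.
Qed.

Lemma br_eq a b c d : uniq [:: a; b; c; d] -> [set a; b; c; d] \in Bs ->
  bracket Bs a b = bracket Bs c d.
Proof.
move=> U HL; have U' := U; unq U'.
apply/permP => w.
case: (eqVneq w a) => [->|Hwa].
  rewrite br_a // (@br_line c d a b) //; [uq | lperm HL].
case: (eqVneq w b) => [->|Hwb].
  rewrite br_b // (@br_line c d b a) //; [uq | lperm HL].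
case: (eqVneq w c) => [->|Hwc].
  rewrite br_a // (@br_line a b c d) //.
case: (eqVneq w d) => [->|Hwd].
  rewrite br_b // (@br_line a b d c) //; [uq | lperm HL].
have Hab : a != b by uq.
case: (br_cases Hab Hwa Hwb) => [[e [Ue [HLe ->]]]|[Hn ->]].
  have Ue' := Ue; unq Ue'.
  have Hec : e != c.
    apply/eqP => Eec; subst e.
    have := @br_line a b c w; rewrite (br_line U HL) => H.
    have : d = w by apply: H; [uq | lperm HLe].
    by move/eqP; dist.
  have Hed : e != d.
    apply/eqP => Eed; subst e.
    have := @br_line a b d w; rewrite (@br_line a b d c) => [H||]; first last.
    - lperm HL.
    - uq.
    have : c = w by apply: H; [uq | lperm HLe].
    by move/eqP; dist.
  apply/esym; apply: br_line; first by uq.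
  apply: (tri HL HLe); uq.
have Hcd : c != d by uq.
case: (br_cases Hcd Hwc Hwd) => [[e [Ue [HLe _]]]|[_ ->]] //.
have Ue' := Ue; unq Ue'.
have HL2 : [set c; d; a; b] \in Bs by lperm HL.
have Hea : e != a.
  apply/eqP => Eea; subst e.
  have := @br_line c d a w; rewrite (@br_line c d a b) => [H||]; first last.
  - lperm HL.
  - uq.
  have : b = w by apply: H; [uq | lperm HLe].
  by move/eqP; dist.
have Heb : e != b.
  apply/eqP => Eeb; subst e.
  have := @br_line c d b w; rewrite (@br_line c d b a) => [H||]; first last.
  - lperm HL.
  - uq.
  have : a = w by apply: H; [uq | lperm HLe].
  by move/eqP; dist.
have := tri HL2 HLe; rewrite /= !inE !negb_or; dist => /(_ isT) H.
by move: Hn; rewrite (@line_ovl _ a b w H) // !inE eqxx ?orbT.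
Qed.


Lemma aut_line g p q r s : automorphism Bs g ->
  ([set p; q; r; s] \in Bs) = ([set g p; g q; g r; g s] \in Bs).
Proof. by move=> Hg; rewrite (Hg [set p; q; r; s]) !imsetU !imset_set1. Qed.

Lemma br_conj g a b w : automorphism Bs g ->
  bracket Bs (g a) (g b) (g w) = g (bracket Bs a b w).
Proof.
move=> Hg.
case: (eqVneq a b) => [->|Hab]; first by rewrite !br_aa !perm1.
have Hgab : g a != g b by rewrite (inj_eq (@perm_inj _ g)).
case: (eqVneq w a) => [->|Hwa]; first by rewrite !br_a //.
case: (eqVneq w b) => [->|Hwb]; first by rewrite !br_b //.
have Hgwa : g w != g a by rewrite (inj_eq (@perm_inj _ g)).
have Hgwb : g w != g b by rewrite (inj_eq (@perm_inj _ g)).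
case: (br_cases Hab Hwa Hwb) => [[d [U [HL ->]]]|[Hn ->]].
  apply: br_line; last by rewrite -(aut_line _ _ _ _ Hg).
  have : uniq (map g [:: a; b; w; d]) by rewrite (map_inj_uniq (@perm_inj _ g)).
  by [].
apply: br_fix => //; apply/negP => Hin.
have U : uniq [:: g a; g b; g w] by uq.
have [e [Ue HLe]] := ovl_ex U Hin.
move: HLe; rewrite -(permKV g e) -(aut_line _ _ _ _ Hg) => HLe.
by move: Hn; rewrite (@line_ovl _ a b w HLe) // !inE eqxx ?orbT.
Qed.

Lemma br_conjP g a b : automorphism Bs g ->
  g^-1 * bracket Bs a b * g = bracket Bs (g a) (g b).
Proof.
move=> Hg; apply/permP => w; rewrite !permM.
by rewrite -{2}(permKV g w) br_conj.
Qed.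

Lemma aut_mul g h : automorphism Bs g -> automorphism Bs h -> automorphism Bs (g * h).
Proof.
move=> Hg Hh B.
have -> : (g * h) @: B = h @: (g @: B).
  by rewrite -imset_comp; apply: eq_imset => x; rewrite permM.
by rewrite -Hh -Hg.
Qed.

Lemma aut_one : automorphism Bs 1.
Proof. by move=> B; rewrite (eq_imset (g := id)) ?imset_id // => x; rewrite perm1. Qed.

Lemma sub3 (t : {set T}) p q r s : uniq [:: p; q; r; s] -> t \subset [set p; q; r; s] -> #|t| = 3 ->
  [\/ t = [set q; r; s], t = [set p; r; s], t = [set p; q; s] | t = [set p; q; r]].
Proof.
move=> U Hsub Ht.
set S := [set p; q; r; s].
have : #|S :\: t| == 1%N by rewrite cardsD (setIidPr Hsub) card4 // Ht.
case/cards1P => x Hx.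
have Et : t = S :\: [set x] by rewrite -Hx setDDr setDv set0U (setIidPr Hsub).
have : x \in S :\: t by rewrite Hx set11.
rewrite inE => /andP[_]; rewrite !inE; unq U.
move=> /orP[/orP[/orP[]|]|] /eqP Ex; subst x.
- by constructor 1; rewrite Et; solveset.
- by constructor 2; rewrite Et; solveset.
- by constructor 3; rewrite Et; solveset.
- by constructor 4; rewrite Et; solveset.
Qed.


Lemma colE p q r : uniq [:: p; q; r] ->
  ([set p; q; r] \in collinear_triples Bs) = (r \in overline Bs p q).
Proof.
move=> U; rewrite inE card3 // eqxx /=.
apply/existsP/ovlP => [[B /andP[HB Hs]]|[B HB /and3P[Hp Hq Hr]]]; exists B => //.
  by rewrite !(subsetP Hs) // !inE eqxx ?orbT.
rewrite HB /=; apply/subsetP => w; rewrite !inE => /orP[/orP[]|] /eqP ->; by [].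
Qed.

Lemma card3g (U : finType) (p q r : U) : uniq [:: p; q; r] -> #|[set p; q; r]| = 3.
Proof.
move=> H; rewrite (@eq_card _ _ (mem [:: p;q;r])); first exact/card_uniqP.
by move=> w; rewrite !inE !orbA.
Qed.

Hypothesis Htg : forall S : {set T}, #|S| = 4 ->
  #|[set t in collinear_triples Bs | t \subset S]| \in [:: 0; 2; 4]%N.

Lemma Xchar p q r s t : uniq [:: p; q; r; s] ->
  (t \in [set t in collinear_triples Bs | t \subset [set p; q; r; s]]) =
  [|| (t == [set q; r; s]) && (s \in overline Bs q r),
      (t == [set p; r; s]) && (s \in overline Bs p r),
      (t == [set p; q; s]) && (s \in overline Bs p q) |
      (t == [set p; q; r]) && (r \in overline Bs p q)].
Proof.
move=> U; have U' := U; unq U'.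
rewrite inE; apply/andP/idP => [[Hc Hs]|].
  have Ht : #|t| = 3 by move: Hc; rewrite inE => /andP[/eqP].
  case: (sub3 U Hs Ht) => Et; subst t; rewrite colE in Hc; try by uq.
  - by rewrite eqxx Hc.
  - by rewrite eqxx Hc orbT.
  - by rewrite eqxx Hc !orbT.
  - by rewrite eqxx Hc !orbT.
move=> /or4P[] /andP[/eqP -> H]; (split; [rewrite colE //; uq | apply/subsetP => w; rewrite !inE; by do !case: (_ == _)]).
Qed.

Lemma set3_neq (p q r p' q' r' x : T) : x \in [set p; q; r] -> x \notin [set p'; q'; r'] ->
  [set p; q; r] != [set p'; q'; r'].
Proof. by move=> H1 H2; apply/eqP => E; rewrite E in H1; rewrite H1 in H2. Qed.

Lemma TG3 p q r s : uniq [:: p; q; r; s] -> r \in overline Bs p q -> s \in overline Bs p q ->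
  s \in overline Bs p r -> s \in overline Bs q r.
Proof.
move=> U H1 H2 H3; apply: contraT => Hn.
have U' := U; unq U'.
have E : [set t in collinear_triples Bs | t \subset [set p; q; r; s]] =
         [set [set p; r; s]; [set p; q; s]; [set p; q; r]].
  apply/setP => t; rewrite Xchar // !in_setU !in_set1 (negbTE Hn) H1 H2 H3 andbF !andbT /=.
  by rewrite !orbA.
have := Htg (card4 U); rewrite E card3g //.
rewrite /= !inE !negb_or; apply/and3P; split; [apply/andP; split| |];
 [apply: (@set3_neq _ _ _ _ _ _ r) | apply: (@set3_neq _ _ _ _ _ _ s) | apply: (@set3_neq _ _ _ _ _ _ s) | done];
 rewrite !inE; dist; by rewrite ?orbT.
Qed.

Lemma TG1 p q r s : uniq [:: p; q; r; s] -> r \in overline Bs p q -> s \notin overline Bs p q ->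
  s \notin overline Bs p r -> s \in overline Bs q r.
Proof.
move=> U H1 H2 H3; apply: contraT => Hn.
have E : [set t in collinear_triples Bs | t \subset [set p; q; r; s]] = [set [set p; q; r]].
  apply/setP => t; rewrite Xchar // in_set1 (negbTE Hn) H1 (negbTE H2) (negbTE H3) !andbF !andbT.
  by [].
by have := Htg (card4 U); rewrite E cards1.
Qed.


Ltac lovl H := apply: (line_ovl H); by rewrite !inE eqxx ?orbT.

Lemma ovlC a b w : (w \in overline Bs a b) = (w \in overline Bs b a).
Proof. by apply/ovlP/ovlP => [][B HB H]; exists B => //; move: H; rewrite !andbA [(a \in B) && _]andbC. Qed.

Lemma ovlR a b w : (w \in overline Bs a b) = (b \in overline Bs a w).
Proof. by apply/ovlP/ovlP => [][B HB /and3P[H1 H2 H3]]; exists B => //; rewrite H1 H2 H3. Qed.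

Lemma partner a b c (B : {set T}) : a != b -> B \in Bs -> a \in B -> b \notin B -> c \in B ->
  c != a -> c \in overline Bs a b ->
  exists c', [/\ uniq [:: a; b; c; c'], [set a; b; c; c'] \in Bs, c' \notin B &
                 bracket Bs a b c = c'].
Proof.
move=> Hab HB Ha Hb Hc Hca Hov.
have Hcb : c != b by apply/eqP => E; rewrite -E Hc in Hb.
have U : uniq [:: a; b; c] by uq.
have [c' [U' HL]] := ovl_ex U Hov.
exists c'; split => //; last exact: br_line.
apply/negP => Hc'.
have U'' := U'; unq U''.
have E : B = [set a; b; c; c'].
  apply: (ss3 (a := a) (b := c) (c := c')) => //; try uq; by rewrite !inE eqxx ?orbT.
by move: Hb; rewrite E !inE eqxx orbT.
Qed.

Section Shapes.
Variables a b c d e : T.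
Hypothesis U : uniq [:: a; b; c; d; e].
Hypothesis HB : [set a; c; d; e] \in Bs.

Let Hab : a != b. Proof. have U' := U; by unq U'. Qed.
Let Hbnot : b \notin [set a; c; d; e].
Proof. have U' := U; unq U'; rewrite !inE; dist; done. Qed.
Let Hca : c != a. Proof. have U' := U; unq U'; by rewrite eq_sym. Qed.
Let Hda : d != a. Proof. have U' := U; unq U'; by rewrite eq_sym. Qed.
Let Hea : e != a. Proof. have U' := U; unq U'; by rewrite eq_sym. Qed.
Let Hcin : c \in [set a; c; d; e]. Proof. by rewrite !inE eqxx ?orbT. Qed.
Let Hdin : d \in [set a; c; d; e]. Proof. by rewrite !inE eqxx ?orbT. Qed.
Let Hein : e \in [set a; c; d; e]. Proof. by rewrite !inE eqxx ?orbT. Qed.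
Let Hain : a \in [set a; c; d; e]. Proof. by rewrite !inE eqxx ?orbT. Qed.

Lemma S0 : c \notin overline Bs a b -> d \notin overline Bs a b -> e \notin overline Bs a b ->
  [set b; c; d; e] \in Bs.
Proof.
move=> Hc Hd He; have U' := U; unq U'.
have Hbcd : b \in overline Bs c d.
  apply: (@TG1 a); first by uq.
  - lovl HB.
  - by rewrite ovlR.
  - by rewrite ovlR.
have U3 : uniq [:: c; d; b] by uq.
have [e' [Ue HL]] := ovl_ex U3 Hbcd.
have Ue' := Ue; unq Ue'.
case: (eqVneq e' e) => [Ee|Hne].
  by subst e'; lperm HL.
have Hea' : e' != a.
  apply/eqP => Ee; subst e'.
  by move: Hc; rewrite (_ : c \in overline Bs a b) //; lovl HL.
have HB' : [set c; d; a; e] \in Bs by lperm HB.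
have := tri HB' HL; rewrite /= !inE !negb_or; dist => /(_ isT) H.
by move: He; rewrite (_ : e \in overline Bs a b) //; lovl H.
Qed.

Lemma S1 : c \in overline Bs a b -> d \notin overline Bs a b -> e \notin overline Bs a b ->
  [set b; bracket Bs a b c; d; e] \in Bs.
Proof.
move=> Hc Hd He; have U' := U; unq U'.
have [c' [Uc HLc Hc'B ->]] := partner Hab HB Hain Hbnot Hcin Hca Hc.
have Uc' := Uc; unq Uc'; move: Hc'B; rewrite !inE !negb_or => Hc'B; destr.
have HB' : [set a; c; d; e] \in Bs by [].
have HL' : [set a; c; b; c'] \in Bs by lperm HLc.
have := tri HB' HL'; rewrite /= !inE !negb_or; dist => /(_ isT) H.
lperm H.
Qed.

Lemma S2 : c \in overline Bs a b -> d \in overline Bs a b -> e \notin overline Bs a b -> False.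
Proof.
move=> Hc Hd He; have U' := U; unq U'.
have [c' [Uc HLc Hc'B Ec]] := partner Hab HB Hain Hbnot Hcin Hca Hc.
have [d' [Ud HLd Hd'B Ed]] := partner Hab HB Hain Hbnot Hdin Hda Hd.
have Hcd' : c' != d'.
  apply/eqP => E.
  have : c = d by apply: (@perm_inj _ (bracket Bs a b)); rewrite Ec Ed E.
  by move/eqP; dist.
have Uc' := Uc; unq Uc'; move: Hc'B; rewrite !inE !negb_or => Hc'B; destr.
have Ud' := Ud; unq Ud'; move: Hd'B; rewrite !inE !negb_or => Hd'B; destr.
have H1 : [set d; e; b; c'] \in Bs.
  have HL' : [set a; c; b; c'] \in Bs by lperm HLc.
  by have := tri HB HL'; rewrite /= !inE !negb_or; dist => /(_ isT).
have H2 : [set c; e; b; d'] \in Bs.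
  have HB' : [set a; d; c; e] \in Bs by lperm HB.
  have HL' : [set a; d; b; d'] \in Bs by lperm HLd.
  by have := tri HB' HL'; rewrite /= !inE !negb_or; dist => /(_ isT).
have H3 : [set e; d'; a; c'] \in Bs.
  have H2' : [set b; c; e; d'] \in Bs by lperm H2.
  have HL' : [set b; c; a; c'] \in Bs by lperm HLc.
  by have := tri H2' HL'; rewrite /= !inE !negb_or; dist => /(_ isT).
have : e \in overline Bs a b.
  apply: (@TG3 c'); first by uq.
  - lovl HLc.
  - lovl H3.
  - lovl H1.
by rewrite (negbTE He).
Qed.

Lemma S3 : c \in overline Bs a b -> d \in overline Bs a b -> e \in overline Bs a b ->
  [set b; bracket Bs a b c; bracket Bs a b d; bracket Bs a b e] \in Bs.
Proof.
move=> Hc Hd He; have U' := U; unq U'.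
have [c' [Uc HLc Hc'B Ec]] := partner Hab HB Hain Hbnot Hcin Hca Hc.
have [d' [Ud HLd Hd'B Ed]] := partner Hab HB Hain Hbnot Hdin Hda Hd.
have [e' [Ue HLe He'B Ee]] := partner Hab HB Hain Hbnot Hein Hea He.
have Hcd' : c' != d'.
  apply/eqP => E.
  have : c = d by apply: (@perm_inj _ (bracket Bs a b)); rewrite Ec Ed E.
  by move/eqP; dist.
have Hce' : c' != e'.
  apply/eqP => E.
  have : c = e by apply: (@perm_inj _ (bracket Bs a b)); rewrite Ec Ee E.
  by move/eqP; dist.
have Hde' : d' != e'.
  apply/eqP => E.
  have : d = e by apply: (@perm_inj _ (bracket Bs a b)); rewrite Ed Ee E.
  by move/eqP; dist.
rewrite Ec Ed Ee.
have Uc' := Uc; unq Uc'; move: Hc'B; rewrite !inE !negb_or => Hc'B; destr.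
have Ud' := Ud; unq Ud'; move: Hd'B; rewrite !inE !negb_or => Hd'B; destr.
have Ue' := Ue; unq Ue'; move: He'B; rewrite !inE !negb_or => He'B; destr.
have H1 : [set d; e; b; c'] \in Bs.
  have HL' : [set a; c; b; c'] \in Bs by lperm HLc.
  by have := tri HB HL'; rewrite /= !inE !negb_or; dist => /(_ isT).
have H2 : [set e; c'; a; d'] \in Bs.
  have H1' : [set d; b; e; c'] \in Bs by lperm H1.
  have HL' : [set d; b; a; d'] \in Bs by lperm HLd.
  by have := tri H1' HL'; rewrite /= !inE !negb_or; dist => /(_ isT).
have H3 : [set c'; d'; b; e'] \in Bs.
  have H2' : [set a; e; c'; d'] \in Bs by lperm H2.
  have HL' : [set a; e; b; e'] \in Bs by lperm HLe.
  by have := tri H2' HL'; rewrite /= !inE !negb_or; dist => /(_ isT).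
lperm H3.
Qed.

End Shapes.


Lemma K1 a b (B : {set T}) : a != b -> B \in Bs -> a \in B -> b \notin B ->
  bracket Bs a b @: B \in Bs.
Proof.
move=> Hab HB Ha Hb.
have [c [d [e [U E]]]] := rem1 (H4 HB) Ha.
subst B.
rewrite !imsetU !imset_set1 br_a //.
have U5 : uniq [:: a; b; c; d; e].
  have U' := U; unq U'; move: Hb; rewrite !inE !negb_or => Hb; destr; uq.
have U' := U5; unq U'.
have [Hca Hcb Hda] : [/\ c != a, c != b & d != a] by split; uq.
have [Hdb Hea Heb] : [/\ d != b, e != a & e != b] by split; uq.
case: (boolP (c \in overline Bs a b)) => Hc; case: (boolP (d \in overline Bs a b)) => Hd;
  case: (boolP (e \in overline Bs a b)) => He.
- exact: S3.
- by exfalso; apply: (S2 U5 HB Hc Hd He).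
- exfalso; apply: (@S2 a b c e d) => //; [uq | lperm HB].
- rewrite (br_fix Hab Hda Hdb Hd) (br_fix Hab Hea Heb He); exact: S1.
- exfalso; apply: (@S2 a b d e c) => //; [uq | lperm HB].
- rewrite (br_fix Hab Hca Hcb Hc) (br_fix Hab Hea Heb He).
  have H : [set b; bracket Bs a b d; c; e] \in Bs.
    apply: (@S1 a b d c e) => //; [uq | lperm HB].
  lperm H.
- rewrite (br_fix Hab Hca Hcb Hc) (br_fix Hab Hda Hdb Hd).
  have H : [set b; bracket Bs a b e; c; d] \in Bs.
    apply: (@S1 a b e c d) => //; [uq | lperm HB].
  lperm H.
- rewrite (br_fix Hab Hca Hcb Hc) (br_fix Hab Hda Hdb Hd) (br_fix Hab Hea Heb He).
  exact: (S0 U5 HB Hc Hd He).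
Qed.

Lemma K12 a b (B : {set T}) : a != b -> B \in Bs -> a \in B -> bracket Bs a b @: B \in Bs.
Proof.
move=> Hab HB Ha.
case: (boolP (b \in B)) => Hb; last exact: K1.
have [c [d [U E]]] := rem2 (H4 HB) Ha Hb Hab.
subst B; have U' := U; unq U'.
rewrite !imsetU !imset_set1 br_a // br_b // (br_line U HB) (@br_line a b d c); first by lperm HB.
  uq.
lperm HB.
Qed.

Lemma br_fwd a b (B : {set T}) : B \in Bs -> bracket Bs a b @: B \in Bs.
Proof.
move=> HB.
case: (eqVneq a b) => [->|Hab]; first by rewrite br_aa -(aut_one B).
case: (boolP (a \in B)) => Ha; first exact: K12.
case: (boolP (b \in B)) => Hb.
  rewrite br_sym; apply: K12 => //; by rewrite eq_sym.
case: (boolP [exists p in B, p \in overline Bs a b]) => Hex.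
  case/existsP: Hex => p /andP[Hp Hov].
  have Hpa : p != a by apply/eqP => E; rewrite -E Hp in Ha.
  have Hpb : p != b by apply/eqP => E; rewrite -E Hp in Hb.
  have U : uniq [:: a; b; p] by uq.
  have [d [U' HL]] := ovl_ex U Hov.
  have Ud := U'; unq Ud.
  rewrite (br_eq U' HL); apply: K12 => //; uq.
have -> : bracket Bs a b @: B = B.
  rewrite -[RHS]imset_id; apply: eq_in_imset => p Hp.
  have Hpa : p != a by apply/eqP => E; rewrite -E Hp in Ha.
  have Hpb : p != b by apply/eqP => E; rewrite -E Hp in Hb.
  apply: br_fix => //; apply/negP => Hov.
  by move/existsP: Hex; apply; exists p; rewrite Hp.
exact: HB.
Qed.

Lemma br_aut a b : automorphism Bs (bracket Bs a b).
Proof.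
move=> B; apply/idP/idP; first exact: br_fwd.
move/(br_fwd a b).
rewrite -imset_comp (eq_imset (g := id)) ?imset_id // => x /=.
by rewrite -permM br_inv perm1.
Qed.


Lemma br_invg a b : (bracket Bs a b)^-1 = bracket Bs a b.
Proof. by apply/eqP; rewrite eq_invg_mul br_inv. Qed.

Lemma ord_prime (g : {perm T}) p : prime p -> g ^+ p = 1 -> g != 1 -> #[g] = p.
Proof.
move=> Pp Hg Hn; apply/(prime_nt_dvdP Pp); first by rewrite order_eq1.
by rewrite order_dvdn Hg.
Qed.

Lemma prod_ne1 x y z : x != y -> y != z -> x != z ->
  bracket Bs x y * bracket Bs y z != 1.
Proof.
move=> Hxy Hyz Hxz; apply/eqP => E.
have := congr1 (fun g : {perm T} => g x) E.
rewrite permM perm1 br_a // br_a // => Ezx.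
by rewrite Ezx eqxx in Hxz.
Qed.

Lemma part_a x y z : x != y -> y != z -> x != z -> x \in overline Bs y z ->
  #[bracket Bs x y * bracket Bs y z] = 2%N.
Proof.
move=> Hxy Hyz Hxz Hov.
have U : uniq [:: y; z; x] by uq.
have [w [U' HL]] := ovl_ex U Hov.
have Uw := U'; unq Uw.
have E1 : bracket Bs x y z = w by apply: br_line; [uq | lperm HL].
have E : bracket Bs x y * bracket Bs y z * bracket Bs x y = bracket Bs y z.
  rewrite -{1}br_invg (br_conjP _ _ (br_aut x y)) br_b // E1.
  by rewrite (br_eq U' HL).
apply: ord_prime => //; last exact: prod_ne1.
by rewrite expgS expg1 !mulgA E br_inv.
Qed.

Lemma part_rel x y z : x != y -> y != z -> x != z -> x \notin overline Bs y z ->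
  bracket Bs x y * bracket Bs y z * bracket Bs x y = bracket Bs x z /\
  bracket Bs y z * bracket Bs x y * bracket Bs y z = bracket Bs x z.
Proof.
move=> Hxy Hyz Hxz Hov.
have Hzx : z != x by rewrite eq_sym.
have Hzy : z != y by rewrite eq_sym.
have Hzo : z \notin overline Bs x y by rewrite ovlR ovlC ovlR ovlC.
have Hz : bracket Bs x y z = z by exact: br_fix.
have Hx : bracket Bs y z x = x by exact: br_fix.
split.
  by rewrite -{1}br_invg (br_conjP _ _ (br_aut x y)) br_b // Hz.
by rewrite -{1}br_invg (br_conjP _ _ (br_aut y z)) br_a // Hx.
Qed.

Lemma part_b x y z : x != y -> y != z -> x != z -> x \notin overline Bs y z ->
  #[bracket Bs x y * bracket Bs y z] = 3%N.
Proof.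
move=> Hxy Hyz Hxz Hov.
have [E1 E2] := part_rel Hxy Hyz Hxz Hov.
apply: ord_prime => //; last exact: prod_ne1.
have -> : (bracket Bs x y * bracket Bs y z) ^+ 3 =
  (bracket Bs x y * bracket Bs y z * bracket Bs x y) * (bracket Bs y z * bracket Bs x y * bracket Bs y z).
  by rewrite !expgS expg0 mulg1 !mulgA.
by rewrite E1 E2 br_inv.
Qed.

Lemma part_braid x y z : x != y -> y != z -> x != z -> x \notin overline Bs y z ->
  move_seq Bs z [:: x; y; z] = bracket Bs x y.
Proof.
move=> Hxy Hyz Hxz Hov.
have [E1 _] := part_rel Hxy Hyz Hxz Hov.
rewrite /= mulg1 (br_sym z x) -E1 !mulgA.
rewrite -(mulgA (bracket Bs x y * bracket Bs y z)) br_inv mulg1 -mulgA br_inv mulg1.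
by [].
Qed.

Lemma ms_cat a s t : move_seq Bs a (s ++ t) = move_seq Bs a s * move_seq Bs (last a s) t.
Proof.
elim: s a => [|b s IH] a /=; first by rewrite mul1g.
by rewrite IH mulgA.
Qed.

Variable inf : T.

Lemma Linf_br g c d : L_inf Bs inf g -> L_inf Bs inf (g * bracket Bs c d).
Proof.
case=> s ->; set e := last inf s.
case: (eqVneq c d) => [->|Hcd]; first by rewrite br_aa mulg1; exists s.
case: (eqVneq e c) => [Ec|Hec].
  by exists (s ++ [:: d]); rewrite ms_cat -/e Ec /= mulg1.
case: (eqVneq e d) => [Ed|Hed].
  by exists (s ++ [:: c]); rewrite ms_cat -/e Ed /= mulg1 br_sym.
case: (boolP (e \in overline Bs c d)) => Hov.
  have U : uniq [:: c; d; e] by uq.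
  have [w [U' HL]] := ovl_ex U Hov.
  by exists (s ++ [:: w]); rewrite ms_cat -/e /= mulg1 (br_eq U' HL).
exists (s ++ [:: c; d; e]); rewrite ms_cat -/e.
have Hce : c != e by rewrite eq_sym.
have Hde : d != e by rewrite eq_sym.
have Hco : c \notin overline Bs d e by rewrite ovlR ovlC.
by rewrite (part_braid Hcd Hde Hce Hco).
Qed.

Lemma Linf1 : L_inf Bs inf 1.
Proof. by exists [::]. Qed.

Lemma LD_Linf s : forall a h, L_inf Bs inf h -> L_inf Bs inf (h * move_seq Bs a s).
Proof.
elim: s => [|b s IH] a h Hh /=; first by rewrite mulg1.
by rewrite mulgA; apply: IH; apply: Linf_br.
Qed.

Lemma Linf_inv s : forall a h, L_inf Bs inf h -> L_inf Bs inf (h * (move_seq Bs a s)^-1).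
Proof.
elim: s => [|b s IH] a h Hh /=; first by rewrite invg1 mulg1.
by rewrite invMg br_invg mulgA; apply: Linf_br; apply: IH.
Qed.

Lemma ms_aut a s : automorphism Bs (move_seq Bs a s).
Proof.
elim: s a => [|b s IH] a /=; first exact: aut_one.
by apply: aut_mul; [apply: br_aut | apply: IH].
Qed.

Lemma part_c : (forall g, L_D Bs g <-> L_inf Bs inf g) /\ is_group_of_automorphisms Bs (L_D Bs).
Proof.
have LDi : forall g, L_D Bs g -> L_inf Bs inf g.
  by move=> g [a [s ->]]; have := LD_Linf s a Linf1; rewrite mul1g.
have LiD : forall g, L_inf Bs inf g -> L_D Bs g by move=> g [s ->]; exists inf, s.
split; first by move=> g; split; [apply: LDi | apply: LiD].
split.
- by exists inf, [::].
- move=> g h Hg [a [s ->]]; apply: LiD; apply: LD_Linf; exact: LDi.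
- move=> g [a [s ->]]; apply: LiD; rewrite -[_^-1]mul1g; exact: Linf_inv Linf1.
- by move=> g [a [s ->]]; apply: ms_aut.
Qed.

End S.

Theorem lemma4p5 (T : finType) (n lam : nat) (Bs : {set {set T}})
  (Hdes : design_2 Bs n lam) (Hss : supersimple Bs) (Htri : prop_triangle Bs)
  (Htwo : regular_two_graph (collinear_triples Bs))
  (inf x y z : T) (Hxy : x != y) (Hyz : y != z) (Hxz : x != z) :
  [/\ (x \in overline Bs y z -> #[bracket Bs x y * bracket Bs y z] = 2%N),
      (x \notin overline Bs y z -> #[bracket Bs x y * bracket Bs y z] = 3%N),
      (x \notin overline Bs y z -> move_seq Bs z [:: x; y; z] = bracket Bs x y) &
      ((forall g, L_D Bs g <-> L_inf Bs inf g) /\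
       is_group_of_automorphisms Bs (L_D Bs))].
Proof.
case: Hdes => _ H4 _.
case: Htwo => _ [_ Htg].
split.
- exact: part_a.
- exact: part_b.
- exact: part_braid.
- exact: part_c.
Qed.
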